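(* For every $0<\alpha<10^{-5}$ there exists $m_0$ such that for all $m\ge m_0$ the following holds. Suppose $H$ is a $3$-graph on $V=A\cup B$ where $A,B$ are disjoint with $|A|=|B|=6m$, and every vertex of $H$ is $\alpha$-good in $H$ with respect to $\mathcal B[A,B]$. Then $H$ contains a $K_4^-$-factor.
   Context: $K_4^-$ is the $3$-graph with $4$ vertices and $3$ edges; a $K_4^-$-factor is a set of vertex-disjoint (not necessarily induced) copies covering all vertices. For disjoint $A,B$, $\mathcal B[A,B]$ is the $3$-graph on $A\cup B$ whose edges are all triples containing an odd number of vertices of $A$. For $3$-graphs $H,H'$ on the same vertex set $V$ with $|V|=n$, a vertex $v$ is $\alpha$-good in $H$ with respect to $H'$ if the number of edges of $H'$ containing $v$ that are not edges of $H$ is at most $\alpha n^2$. *)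

(* Defs.v *)
From HB Require Import structures.
From mathcomp Require Import all_boot all_order all_algebra.
Set Implicit Arguments. Unset Strict Implicit. Unset Printing Implicit Defensive.
Import Order.TTheory GRing.Theory Num.Theory.

Definition is_3graph (V : finType) (H : {set {set V}}) : bool :=
  [forall e in H, #|e| == 3].

Definition BAB (V : finType) (A B : {set V}) : {set {set V}} :=
  [set e : {set V} | [&& e \subset A :|: B, #|e| == 3 & odd #|e :&: A|]].

Definition alpha_good (R : realFieldType) (alpha : R) (V : finType)
    (H H' : {set {set V}}) (v : V) : Prop :=
  (#|[set e in H' | (v \in e) && (e \notin H)]|%:R <= alpha * (#|V| ^ 2)%:R)%R.

(* S spans a (not necessarily induced) copy of K4^- in H: |S| = 4 and
   at least 3 of the triples inside S are edges of H (any 3 of the 4 triples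
   of a 4-set form a K4^-). *)
Definition spans_K4minus (V : finType) (H : {set {set V}}) (S : {set V}) : bool :=
  (#|S| == 4) && (3 <= #|[set e in H | e \subset S]|).

Definition has_K4minus_factor (V : finType) (H : {set {set V}}) : Prop :=
  exists P : {set {set V}}, partition P [set: V] /\ {in P, forall S, spans_K4minus H S}.

(* Main.v *)
Require Import Defs.
From HB Require Import structures.
From mathcomp Require Import all_boot all_order all_algebra zify ring lra.
Set Implicit Arguments. Unset Strict Implicit. Unset Printing Implicit Defensive.

Import Order.TTheory GRing.Theory Num.Theory.

Lemma sub_card_set (T : finType) (A : {set T}) n :
  n <= #|A| -> exists B : {set T}, B \subset A /\ #|B| = n.
Proof.
move=> /card_geqP [s [us ss sA]]; exists [set x in s]; split.
  by apply/subsetP => x; rewrite inE => /sA.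
by rewrite cardsE (card_uniqP us).
Qed.

Lemma card_split (T : finType) (M : {set T}) (P : pred T) :
  #|[set y in M | P y]| + #|[set y in M | ~~ P y]| = #|M|.
Proof.
rewrite -(cardsID [set y | P y] M); f_equal; apply: eq_card => y;
  by rewrite !inE // andbC.
Qed.

Definition edge3 (T : finType) (a u w : T) : {set T} := a |: (u |: [set w]).

Lemma card_edge3 (T : finType) (a u w : T) :
  a != u -> a != w -> u != w -> #|edge3 a u w| = 3.
Proof.
move=> au aw uw; rewrite /edge3 !cardsU1 cards1 !inE.
by rewrite (negbTE au) (negbTE aw) (negbTE uw).
Qed.

Lemma edge3C (T : finType) (a u w : T) : edge3 a u w = edge3 a w u.
Proof. by apply/setP => x; rewrite !inE; case: (x == u); case: (x == w); rewrite ?orbT. Qed.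


Section Matching.
Variables (T : finType) (X Y : {set T}) (r : rel T).

Definition matching (Mt : {set T * T}) : Prop :=
  [/\ (forall p, p \in Mt -> [/\ p.1 \in X, p.2 \in Y & r p.1 p.2]),
      (forall p q, p \in Mt -> q \in Mt -> p.1 = q.1 -> p = q) &
      (forall p q, p \in Mt -> q \in Mt -> p.2 = q.2 -> p = q)].

Lemma match_sub (Mt Mt' : {set T * T}) : matching Mt -> Mt' \subset Mt -> matching Mt'.
Proof.
move=> [h1 h2 h3] /subsetP s; split=> [p /s /h1 //|p q /s ps /s qs|p q /s ps /s qs].
  exact: h2.
exact: h3.
Qed.

Lemma match_add Mt x y : matching Mt -> x \in X -> y \in Y -> r x y ->
  (forall p, p \in Mt -> p.1 != x) -> (forall p, p \in Mt -> p.2 != y) ->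
  matching ((x,y) |: Mt) /\ #|(x,y) |: Mt| = #|Mt|.+1.
Proof.
move=> [h1 h2 h3] xX yY rxy fx fy; split; last first.
  rewrite cardsU1; case: ((x, y) \in Mt) / idP => [/fx /= /eqP //|_].
  by rewrite add1n.
split.
- move=> p /setU1P [-> //|/h1 //].
- move=> p q /setU1P [->|pM] /setU1P [->|qM] //= e.
  + by move: (fx q qM); rewrite -e eqxx.
  + by move: (fx p pM); rewrite e eqxx.
  + exact: h2.
- move=> p q /setU1P [->|pM] /setU1P [->|qM] //= e.
  + by move: (fy q qM); rewrite -e eqxx.
  + by move: (fy p pM); rewrite e eqxx.
  + exact: h3.
Qed.

Lemma fresh_exists (Z : {set T}) (Mt : {set T * T}) (f : T * T -> T) :
  #|Mt| < #|Z| -> exists2 z, z \in Z & forall p, p \in Mt -> f p != z.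
Proof.
move=> lt.
have : 0 < #|Z :\: (f @: Mt)|.
  rewrite cardsD; have := leq_imset_card f Mt.
  have := subset_leq_card (subsetIr Z (f @: Mt)). move=> a b; rewrite subn_gt0; exact: (leq_ltn_trans a (leq_ltn_trans b lt)).
rewrite card_gt0 => /set0Pn [z]; rewrite !inE => /andP [nz zZ].
exists z => // p pM; apply/eqP => e; move/negP: nz; apply; rewrite -e.
exact: imset_f.
Qed.

Hypothesis hyp : forall x y, x \in X -> y \in Y ->
  #|[set x' in X | ~~ r x' y]| <= #|[set y' in Y | r x y']|.

Lemma augment Mt : matching Mt -> #|Mt| < #|X| -> #|X| = #|Y| ->
  exists Mt', matching Mt' /\ #|Mt'| = #|Mt|.+1.
Proof.
move=> mM ltX eXY.
have [x0 x0X fx0] := fresh_exists (fun p => p.1) ltX.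
have ltY : #|Mt| < #|Y| by rewrite -eXY.
have [y0 y0Y fy0] := @fresh_exists Y Mt (fun p => p.2) ltY.
case: (boolP [exists y in Y, r x0 y && [forall p in Mt, p.2 != y]]).
  move=> /exists_inP [y yY /andP [rxy /forall_inP fy]].
  by exists ((x0,y) |: Mt); apply: match_add.
move=> /exists_inP Nex.
have NY : forall y, y \in Y -> r x0 y -> exists2 p, p \in Mt & p.2 = y.
  move=> y yY rxy; case: (boolP [exists p in Mt, p.2 == y]).
    by move=> /exists_inP [p pM /eqP e]; exists p.
  move=> /exists_inP nE; exfalso; apply: Nex; exists y => //; rewrite rxy /=.
  by apply/forall_inP => p pM; apply/negP => e; apply: nE; exists p.
case: (boolP [exists p in Mt, r x0 p.2 && r p.1 y0]); last first.
  move=> /exists_inP nE; exfalso.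
  pose Q := [set p in Mt | r x0 p.2].
  have c1 : #|[set y' in Y | r x0 y']| <= #|Q|.
    apply: (leq_trans _ (leq_imset_card (fun p => p.2) Q)).
    apply: subset_leq_card; apply/subsetP => y; rewrite inE => /andP [yY rxy].
    have [p pM e] := NY y yY rxy; apply/imsetP; exists p; last by rewrite e.
    by rewrite /Q inE pM e.
  have c2 : #|(fun p => p.1) @: Q| = #|Q|.
    apply: card_in_imset => p q; rewrite /Q !inE => /andP [pM _] /andP [qM _].
    by case: mM => _ h2 _; apply: h2.
  have c3 : #|x0 |: ((fun p => p.1) @: Q)| <= #|[set x' in X | ~~ r x' y0]|.
    apply: subset_leq_card; apply/subsetP => x /setU1P [->|].
      rewrite inE x0X /=; apply/negP => rxy; apply: Nex; exists y0 => //.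
      by rewrite rxy; apply/forall_inP.
    move=> /imsetP [p]; rewrite /Q !inE => /andP [pM rp] ->.
    case: mM => h1 _ _; have [p1X _ _] := h1 p pM.
    rewrite p1X /=; apply/negP => rr; apply: nE; exists p => //.
    by rewrite rp rr.
  have c4 : x0 \notin (fun p => p.1) @: Q.
    apply/imsetP => [[p]]; rewrite inE => /andP [pM _] e.
    by move: (fx0 p pM); rewrite e eqxx.
  move: c3; rewrite cardsU1 c4 c2 => c3.
  have := hyp x0X y0Y; lia.
move=> /exists_inP [p pM /andP [rp2 rp1]].
case: (mM) => h1 h2 h3; have [p1X p2Y _] := h1 p pM.
have m1 : matching (Mt :\ p) by apply: match_sub mM _; apply: subsetDl.
have [m2 c2] : matching ((p.1, y0) |: (Mt :\ p)) /\
               #|(p.1, y0) |: (Mt :\ p)| = #|Mt :\ p|.+1.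
  apply: match_add => // q; rewrite !inE => /andP [qp qM].
    by apply/eqP => e; move/eqP: qp; apply; apply: h2.
  exact: fy0.
have [m3 c3] : matching ((x0, p.2) |: ((p.1, y0) |: (Mt :\ p))) /\
   #|(x0, p.2) |: ((p.1, y0) |: (Mt :\ p))| = #|(p.1, y0) |: (Mt :\ p)|.+1.
  apply: match_add => // q; rewrite !inE => /orP [/eqP -> /=|/andP [qp qM]].
  - by apply/eqP => e; move: (fx0 p pM); rewrite e eqxx.
  - exact: fx0.
  - by apply/eqP => e; move: (fy0 p pM); rewrite e eqxx.
  - by apply/eqP => e; move/eqP: qp; apply; apply: h3.
exists ((x0, p.2) |: ((p.1, y0) |: (Mt :\ p))); split => //.
rewrite c3 c2 (cardsD1 p Mt) pM; lia.
Qed.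

Lemma matching_lemma : #|X| = #|Y| ->
  exists f : T -> T, [/\ {in X &, injective f}, f @: X = Y & {in X, forall x, r x (f x)}].
Proof.
move=> eXY.
have : forall k, k <= #|X| -> exists Mt, matching Mt /\ #|Mt| = k.
  elim=> [_|k IH lt].
    exists set0; rewrite cards0; split => //; split => p; rewrite inE //.
  have [Mt [mM cM]] := IH (ltnW lt).
  have lt2 : #|Mt| < #|X| by rewrite cM.
  by have := augment mM lt2 eXY; rewrite cM.
move=> /(_ #|X| (leqnn _)) [Mt [[h1 h2 h3] cM]].
pose f x := if [pick p in Mt | p.1 == x] is Some p then p.2 else x.
have im1 : (fun p => p.1) @: Mt = X.
  apply/eqP; rewrite eqEcard; apply/andP; split.
    by apply/subsetP => x /imsetP [p /h1 [] ? _ _ ->].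
  rewrite card_in_imset ?cM // => p q pM qM; exact: h2.
have fP : forall x, x \in X -> exists2 p, p \in Mt & p.1 = x /\ f x = p.2.
  move=> x; rewrite -im1 => /imsetP [p pM ->]; exists p => //; split => //.
  rewrite /f; case: pickP => [q /andP [qM /eqP e]|/(_ p)]; last by rewrite pM eqxx.
  by rewrite (h2 q p).
exists f; split.
- move=> x1 x2 /fP [p1 p1M [<- ->]] /fP [p2 p2M [<- ->]] e.
  by rewrite (h3 p1 p2).
- apply/eqP; rewrite eqEcard; apply/andP; split.
    by apply/subsetP => y /imsetP [x /fP [p pM [_ ->]] ->]; case: (h1 p pM).
  rewrite -eXY card_in_imset //.
  move=> x1 x2 /fP [p1 p1M [<- ->]] /fP [p2 p2M [<- ->]] e.
  by rewrite (h3 p1 p2).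
- by move=> x /fP [p pM [<- ->]]; case: (h1 p pM).
Qed.
End Matching.


Section TF.
Variables (T : finType) (g : rel T).

Definition TFout (S R M L : {set T}) (s t : T -> T) k : Prop :=
 [/\ R :|: M :|: L = S, [/\ [disjoint R & M], [disjoint R & L] & [disjoint M & L]],
     #|R| = k,
     ({in R &, injective s} /\ s @: R = M) &
     (({in M &, injective t} /\ t @: M = L) /\
     {in R, forall x, [&& g x (s x), g x (t (s x)) & g (s x) (t (s x))]})].

Hypothesis gsym : forall x y, g x y = g y x.

Lemma TF (S : {set T}) k : #|S| = 3 * k ->
  (forall s, s \in S -> 4 * #|[set u in S | (u != s) && ~~ g s u]| <= k) ->
  exists R M L s t, TFout S R M L s t k.
Proof.
move=> cS nbS.
pose nb s := [set u in S | (u != s) && ~~ g s u].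
have [R [RS cR]] : exists R : {set T}, R \subset S /\ #|R| = k.
  by apply: sub_card_set; rewrite cS; lia.
have cS1 : #|S :\: R| = 2 * k.
  by rewrite cardsD (setIidPr RS) cS cR; lia.
have [M [MS1 cM]] : exists M : {set T}, M \subset S :\: R /\ #|M| = k.
  by apply: sub_card_set; rewrite cS1; lia.
pose L := (S :\: R) :\: M.
have cL : #|L| = k by rewrite /L cardsD (setIidPr MS1) cS1 cM; lia.
have inS : forall x, x \in S = [|| x \in R, x \in M | x \in L].
  move=> x; rewrite /L !inE; move: (subsetP RS x) (subsetP MS1 x).
  rewrite !inE; case: (x \in R); case: (x \in M); case: (x \in S) => //= h1 h2;
    first [exact: h1 isT | exact: h2 isT].
have MS : M \subset S by apply: (subset_trans MS1); apply: subsetDl.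
have LS : L \subset S by rewrite /L; apply: (subset_trans (subsetDl _ _)); apply: subsetDl.
have dRM : [disjoint R & M].
  rewrite -setI_eq0; apply/eqP/setP => x; rewrite !inE.
  apply/negP => /andP [xR xM]; move: (subsetP MS1 x xM); by rewrite !inE xR.
have dRL : [disjoint R & L].
  by rewrite -setI_eq0; apply/eqP/setP => x; rewrite /L !inE; case: (x \in R); rewrite ?andbF.
have dML : [disjoint M & L].
  by rewrite -setI_eq0; apply/eqP/setP => x; rewrite /L !inE; case: (x \in M); rewrite ?andbF.
have nbc : forall s (Z : {set T}), s \in S -> Z \subset S -> s \notin Z ->
    #|[set y in Z | ~~ g s y]| <= #|nb s|.
  move=> s Z sS ZS sZ; apply: subset_leq_card; apply/subsetP => y; rewrite !inE.
  move=> /andP [yZ ->]; move/subsetP: ZS => /(_ y yZ) ->; rewrite andbT.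
  by apply/eqP => e; move: sZ; rewrite -e yZ.
have dj : forall (Z W : {set T}) x, [disjoint Z & W] -> x \in Z -> x \notin W.
  by move=> Z W x /disjointFr h /h ->.
have dj' : forall (Z W : {set T}) x, [disjoint Z & W] -> x \in W -> x \notin Z.
  by move=> Z W x /disjointFl h /h ->.
have [t [tinj tim tr]] : exists t : T -> T,
    [/\ {in M &, injective t}, t @: M = L & {in M, forall x, g x (t x)}].
  apply: matching_lemma; last by rewrite cM cL.
  move=> x y xM yL.
  have yS : y \in S by move/subsetP: LS => /(_ y yL).
  have xS : x \in S by move/subsetP: MS => /(_ x xM).
  have h1 : #|[set x' in M | ~~ g x' y]| <= #|nb y|.
    have -> : [set x' in M | ~~ g x' y] = [set x' in M | ~~ g y x'].
      by apply/setP => z; rewrite !inE gsym.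
    by apply: nbc => //; apply: dj' dML yL.
  have h2 := nbc x L xS LS (dj _ _ _ dML xM).
  have h3 := card_split L (g x).
  have := nbS y yS; have := nbS x xS; rewrite -/(nb x) -/(nb y); lia.
have [s [sinj sim sr]] : exists s : T -> T,
    [/\ {in R &, injective s}, s @: R = M & {in R, forall x, g x (s x) && g x (t (s x))}].
  apply: (matching_lemma (r := fun a b => g a b && g a (t b))); last by rewrite cM cR.
  move=> x y xR yM /=.
  have yS : y \in S by move/subsetP: MS => /(_ y yM).
  have tyL : t y \in L by rewrite -tim; apply: imset_f.
  have tyS : t y \in S by move/subsetP: LS => /(_ _ tyL).
  have xS : x \in S by move/subsetP: RS => /(_ x xR).
  have h1 : #|[set x' in R | ~~ (g x' y && g x' (t y))]| <= #|nb y| + #|nb (t y)|.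
    apply: (leq_trans _ (leq_card_setU _ _)); apply: subset_leq_card.
    apply/subsetP => z; rewrite !inE negb_and => /andP [zR h].
    have zS : z \in S by move/subsetP: RS => /(_ z zR).
    rewrite zS /= (gsym y) (gsym (t y)).
    have zy : z != y by apply/eqP => e; move: (dj _ _ _ dRM zR); rewrite e yM.
    have zty : z != t y by apply/eqP => e; move: (dj _ _ _ dRL zR); rewrite e tyL.
    by rewrite zy zty.
  have h2 := card_split M (fun y' => g x y' && g x (t y')).
  have h3 : #|[set y' in M | ~~ (g x y' && g x (t y'))]| <=
            #|[set y' in M | ~~ g x y']| + #|[set y' in M | ~~ g x (t y')]|.
    apply: (leq_trans _ (leq_card_setU _ _)); apply: subset_leq_card.
    by apply/subsetP => z; rewrite !inE negb_and => /andP [-> /orP [] ->]; rewrite ?orbT.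
  have h4 := nbc x M xS MS (dj _ _ _ dRM xR).
  have h5 : #|[set y' in M | ~~ g x (t y')]| <= #|nb x|.
    rewrite -(card_in_imset (f := t)); last first.
      by move=> a b; rewrite !inE => /andP [aM _] /andP [bM _]; apply: tinj.
    apply: (leq_trans _ (nbc x L xS LS (dj _ _ _ dRL xR))).
    apply: subset_leq_card; apply/subsetP => z /imsetP [w].
    rewrite inE => /andP [wM h] ->; rewrite inE h andbT -tim; exact: imset_f.
  have := nbS y yS; have := nbS (t y) tyS; have := nbS x xS; rewrite -/(nb x) -/(nb y) -/(nb (t y)).
  rewrite cM in h2; lia.
exists R, M, L, s, t; split => //; last split => //.
- apply/setP => x; rewrite inS !inE; by case: (x \in R); case: (x \in M).
- move=> x xR; have /andP [-> ->] := sr x xR; rewrite /=.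
  by apply: tr; rewrite -sim; apply: imset_f.
Qed.
End TF.


Lemma djF (T : finType) (Z W : {set T}) x : [disjoint Z & W] -> x \in Z -> x \in W = false.
Proof. by move=> /disjointFr h /h. Qed.
Lemma djF' (T : finType) (Z W : {set T}) x : [disjoint Z & W] -> x \in W -> x \in Z = false.
Proof. by move=> /disjointFl h /h. Qed.

Section Glue.
Variables (T : finType) (g : rel T).

Lemma TF_sub S R M L s t k : TFout g S R M L s t k ->
  [/\ R \subset S, M \subset S & L \subset S].
Proof.
move=> [e _ _ _ _]; rewrite -e; split; apply/subsetP => x; rewrite !inE => ->;
by rewrite ?orbT.
Qed.

Lemma TF_glue S1 S2 R1 M1 L1 s1 t1 k1 R2 M2 L2 s2 t2 k2 :
  TFout g S1 R1 M1 L1 s1 t1 k1 -> TFout g S2 R2 M2 L2 s2 t2 k2 ->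
  [disjoint S1 & S2] ->
  TFout g (S1 :|: S2) (R1 :|: R2) (M1 :|: M2) (L1 :|: L2)
    (fun v => if v \in S1 then s1 v else s2 v)
    (fun v => if v \in S1 then t1 v else t2 v) (k1 + k2).
Proof.
move=> h1 h2 d12.
have [/subsetP RS1 /subsetP MS1 /subsetP LS1] := TF_sub h1.
have [/subsetP RS2 /subsetP MS2 /subsetP LS2] := TF_sub h2.
case: h1 => e1 [dRM1 dRL1 dML1] c1 [si1 sm1] [[ti1 tm1] gd1].
case: h2 => e2 [dRM2 dRL2 dML2] c2 [si2 sm2] [[ti2 tm2] gd2].
have nS1 : forall x, x \in S2 -> x \in S1 = false by move=> x; apply: djF'.
have sR1 : forall x, x \in R1 -> s1 x \in M1 by move=> x xR; rewrite -sm1; apply: imset_f.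
have sR2 : forall x, x \in R2 -> s2 x \in M2 by move=> x xR; rewrite -sm2; apply: imset_f.
have tM1 : forall x, x \in M1 -> t1 x \in L1 by move=> x xR; rewrite -tm1; apply: imset_f.
have tM2 : forall x, x \in M2 -> t2 x \in L2 by move=> x xR; rewrite -tm2; apply: imset_f.
have dU : forall (Z1 Z2 W1 W2 : {set T}), [disjoint Z1 & W1] -> [disjoint Z2 & W2] ->
   {subset Z1 <= S1} -> {subset W1 <= S1} -> {subset Z2 <= S2} -> {subset W2 <= S2} ->
   [disjoint Z1 :|: Z2 & W1 :|: W2].
  move=> Z1 Z2 W1 W2 d1 d2 z1 w1 z2 w2.
  rewrite -setI_eq0; apply/eqP/setP => x; rewrite !inE.
  apply/negP => /andP [/orP [xZ|xZ] /orP [xW|xW]].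
  - by rewrite (djF d1 xZ) in xW.
  - by move: (z1 x xZ); rewrite (nS1 x (w2 x xW)).
  - by move: (w1 x xW); rewrite (nS1 x (z2 x xZ)).
  - by rewrite (djF d2 xZ) in xW.
split.
- apply/setP => x; rewrite !inE -e1 -e2 !inE.
  by case: (x \in R1); case: (x \in R2); case: (x \in M1); case: (x \in M2); case: (x \in L1); case: (x \in L2).
- split; apply: dU => //.
- rewrite cardsU c1 c2.
  have -> : R1 :&: R2 = set0.
    apply/setP => x; rewrite !inE; apply/negP => /andP [xa xb].
    by move: (RS1 x xa); rewrite nS1 ?RS2.
  by rewrite cards0 subn0.
- split.
  + move=> x y /setUP [xR|xR] /setUP [yR|yR].
    * by rewrite (RS1 x xR) (RS1 y yR); apply: si1.
    * rewrite (RS1 x xR) (nS1 y (RS2 y yR)) => e.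
      by move: (MS1 _ (sR1 _ xR)); rewrite e (nS1 _ (MS2 _ (sR2 _ yR))).
    * rewrite (RS1 y yR) (nS1 x (RS2 x xR)) => e.
      by move: (MS1 _ (sR1 _ yR)); rewrite -e (nS1 _ (MS2 _ (sR2 _ xR))).
    * by rewrite (nS1 x (RS2 x xR)) (nS1 y (RS2 y yR)); apply: si2.
  + rewrite imsetU -sm1 -sm2; congr (_ :|: _); apply: eq_in_imset => x xR.
      by rewrite (RS1 x xR).
    by rewrite (nS1 x (RS2 x xR)).
- split; first split.
  + move=> x y /setUP [xR|xR] /setUP [yR|yR].
    * by rewrite (MS1 x xR) (MS1 y yR); apply: ti1.
    * rewrite (MS1 x xR) (nS1 y (MS2 y yR)) => e.
      by move: (LS1 _ (tM1 _ xR)); rewrite e (nS1 _ (LS2 _ (tM2 _ yR))).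
    * rewrite (MS1 y yR) (nS1 x (MS2 x xR)) => e.
      by move: (LS1 _ (tM1 _ yR)); rewrite -e (nS1 _ (LS2 _ (tM2 _ xR))).
    * by rewrite (nS1 x (MS2 x xR)) (nS1 y (MS2 y yR)); apply: ti2.
  + rewrite imsetU -tm1 -tm2; congr (_ :|: _); apply: eq_in_imset => x xR.
      by rewrite (MS1 x xR).
    by rewrite (nS1 x (MS2 x xR)).
  + move=> x /setUP [xR|xR].
      by rewrite (RS1 x xR) (MS1 _ (sR1 _ xR)); apply: gd1.
    by rewrite (nS1 x (RS2 x xR)) (nS1 _ (MS2 _ (sR2 _ xR))); apply: gd2.
Qed.
End Glue.


Section Assemble.
Variables (V : finType) (g : rel V) (H : {set {set V}}) (X R M L : {set V}) (f s t : V -> V) (k : nat).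
Hypothesis hTF : TFout g (~: X) R M L s t k.
Hypothesis finj : {in X &, injective f}.
Hypothesis fim : f @: X = R.
Hypothesis hedges : {in X, forall x,
  [&& edge3 x (f x) (s (f x)) \in H, edge3 x (f x) (t (s (f x))) \in H &
      edge3 x (s (f x)) (t (s (f x))) \in H]}.

Definition part x := x |: edge3 (f x) (s (f x)) (t (s (f x))).
Definition cls v := if v \in X then 0 else if v \in R then 1 else if v \in M then 2 else 3.

Lemma assemble : has_K4minus_factor H.
Proof.
have [/subsetP RS /subsetP MS /subsetP LS] := TF_sub hTF.
case: hTF => e [dRM dRL dML] _ [si sm] [[ti tm] _].
have fX : forall x, x \in X -> f x \in R by move=> x xX; rewrite -fim; apply: imset_f.
have sR : forall x, x \in R -> s x \in M by move=> x xR; rewrite -sm; apply: imset_f.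
have tM : forall x, x \in M -> t x \in L by move=> x xR; rewrite -tm; apply: imset_f.
have nX : forall v, v \in ~: X -> v \in X = false by move=> v; rewrite inE => /negbTE.
have c0 : forall x, x \in X -> cls x = 0 by move=> x xX; rewrite /cls xX.
have c1 : forall x, x \in X -> cls (f x) = 1.
  by move=> x xX; rewrite /cls (nX _ (RS _ (fX _ xX))) fX.
have c2 : forall x, x \in X -> cls (s (f x)) = 2.
  move=> x xX; have h := sR _ (fX _ xX).
  by rewrite /cls (nX _ (MS _ h)) (djF' dRM h) h.
have c3 : forall x, x \in X -> cls (t (s (f x))) = 3.
  move=> x xX; have h := tM _ (sR _ (fX _ xX)).
  by rewrite /cls (nX _ (LS _ h)) (djF' dRL h) (djF' dML h).
have key : forall x y v, x \in X -> y \in X -> v \in part x -> v \in part y -> x = y.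
  move=> x y v xX yX; rewrite /part /edge3 !inE.
  move=> /orP [/eqP ->|/orP [/eqP ->|/orP [/eqP ->|/eqP ->]]];
  move=> /orP [/eqP|/orP [/eqP|/orP [/eqP|/eqP]]] => E;
  move: (f_equal cls E); rewrite ?(c0 _ xX) ?(c1 _ xX) ?(c2 _ xX) ?(c3 _ xX)
     ?(c0 _ yX) ?(c1 _ yX) ?(c2 _ yX) ?(c3 _ yX) // => _.
  - by apply: finj.
  - by apply: finj => //; apply: si => //; apply: fX.
  - by apply: finj => //; apply: si; try apply: fX => //; apply: ti => //; apply: sR; apply: fX.
have inpart : forall x, x \in X -> x \in part x by move=> x _; rewrite /part !inE eqxx.
exists [set part x | x in X]; split.
- rewrite /partition; apply/and3P; split.
  + apply/eqP/setP => v; rewrite inE; apply/bigcupP.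
    case vX: (v \in X); first by exists (part v); [apply: imset_f | apply: inpart].
    have : v \in R :|: M :|: L by rewrite e inE vX.
    rewrite !inE => /orP [/orP [vR|vM]|vL].
    * move: vR; rewrite -fim => /imsetP [x xX ->]; exists (part x); first exact: imset_f.
      by rewrite /part /edge3 !inE eqxx orbT.
    * move: vM; rewrite -sm => /imsetP [r]; rewrite -fim => /imsetP [x xX ->] ->.
      exists (part x); first exact: imset_f.
      by rewrite /part /edge3 !inE eqxx !orbT.
    * move: vL; rewrite -tm => /imsetP [m]; rewrite -sm => /imsetP [r].
      rewrite -fim => /imsetP [x xX ->] -> ->.
      exists (part x); first exact: imset_f.
      by rewrite /part /edge3 !inE eqxx !orbT.
  + apply/trivIsetP => P1 P2 /imsetP [x xX ->] /imsetP [y yX ->] neq.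
    rewrite -setI_eq0; apply/eqP/setP => v; rewrite in_setI in_set0; apply/negP => /andP [h1 h2].
    by move/eqP: neq; apply; rewrite (key x y v xX yX h1 h2).
    by apply/imsetP => -[x xX] /setP /(_ x); rewrite inE inpart.
- move=> P1 /imsetP [x xX ->].
  have [h1 h2 h3] := and3P (hedges xX).
  set r := f x in h1 h2 h3 *; set sx := s r in h1 h2 h3 *; set tx := t sx in h1 h2 h3 *.
  have dxr : x != r by apply/eqP => E; move: (f_equal cls E); rewrite c0 ?c1.
  have dxs : x != sx by apply/eqP => E; move: (f_equal cls E); rewrite c0 ?c2.
  have dxt : x != tx by apply/eqP => E; move: (f_equal cls E); rewrite c0 ?c3.
  have drs : r != sx by apply/eqP => E; move: (f_equal cls E); rewrite /r c1 ?c2.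
  have drt : r != tx by apply/eqP => E; move: (f_equal cls E); rewrite /r c1 ?c3.
  have dst : sx != tx by apply/eqP => E; move: (f_equal cls E); rewrite /sx /r c2 ?c3.
  apply/andP; split.
    rewrite /part cardsU1 card_edge3 // /edge3 !inE.
    by rewrite (negbTE dxr) (negbTE dxs) (negbTE dxt).
  have ne12 : edge3 x r sx != edge3 x r tx.
    apply/eqP => /setP /(_ tx); rewrite /edge3 !inE eqxx orbT.
    by rewrite eq_sym (negbTE dxt) eq_sym (negbTE drt) eq_sym (negbTE dst).
  have ne13 : edge3 x r sx != edge3 x sx tx.
    apply/eqP => /setP /(_ tx); rewrite /edge3 !inE eqxx orbT.
    by rewrite eq_sym (negbTE dxt) eq_sym (negbTE drt) eq_sym (negbTE dst).
  have ne23 : edge3 x r tx != edge3 x sx tx.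
    apply/eqP => /setP /(_ r); rewrite /edge3 !inE eqxx /= orbT.
    by rewrite eq_sym (negbTE dxr) (negbTE drs) (negbTE drt).
  rewrite -(card_edge3 ne12 ne13 ne23); apply: subset_leq_card.
  apply/subsetP => E; rewrite /edge3 !inE => /orP [/eqP ->|/orP [/eqP ->|/eqP ->]];
  rewrite ?h1 ?h2 ?h3 /=; apply/subsetP => z; rewrite /part /edge3 !inE;
  by case/orP => [->|/orP [->|->]]; rewrite ?orbT.
Qed.
End Assemble.


Lemma inj3 (V : finType) (t u a u' a' : V) : u != t -> a != t -> a != u ->
  u' != t -> a' != t -> a' != u' -> edge3 a t u = edge3 a' t u' ->
  (u = u' /\ a = a') \/ (u = a' /\ a = u').
Proof.
move=> ut at' au u't a't a'u' E.
have hu : (u \in edge3 a t u) = (u \in edge3 a' t u') by rewrite E.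
have ha : (a \in edge3 a t u) = (a \in edge3 a' t u') by rewrite E.
move: hu ha; rewrite /edge3 !inE !eqxx !orbT (negbTE ut) (negbTE at') /= => /esym hu /esym ha.
case/orP: hu => /eqP hu; case/orP: ha => /eqP ha.
- by move: au; rewrite ha hu eqxx.
- by right.
- by left.
- by move: au; rewrite ha hu eqxx.
Qed.

Section Count.
Variables (V : finType) (A B : {set V}) (H : {set {set V}}) (m : nat).
Hypothesis dAB : [disjoint A & B].
Hypothesis UAB : A :|: B = [set: V].

Definition Mis v := [set e in BAB A B | (v \in e) && (e \notin H)].
Hypothesis hmis : forall v, 500 * #|Mis v| <= m ^ 2.

Definition missA u w := [set a in A | [&& a != u, a != w & edge3 a u w \notin H]].
Definition gp u w := 4 * #|missA u w| <= m.

Lemma gp_sym u w : gp u w = gp w u.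
Proof.
rewrite /gp /missA; congr (4 * _ <= m); apply: eq_card => a; rewrite !inE edge3C.
by case: (a != u); case: (a != w).
Qed.

Lemma badpart (S : {set V}) t : (S \subset A \/ S \subset B) -> t \in S ->
  4 * #|[set u in S | (u != t) && ~~ gp t u]| <= m.
Proof.
move=> hS tS.
set bad := [set u in S | (u != t) && ~~ gp t u].
pose Q := [set q : V * V | (q.1 \in bad) && (q.2 \in missA t q.1)].
have cQ : #|Q| = \sum_(u in bad) #|missA t u|.
  rewrite -sum1dep_card -(pair_big_dep (fun u => u \in bad) (fun u a => a \in missA t u)
     (fun _ _ => 1)) /=.
  by apply: eq_bigr => u _; rewrite sum1_card.
have lb : #|bad| * m.+1 <= 4 * #|Q|.
  rewrite cQ -sum_nat_const big_distrr /=; apply: leq_sum => u.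
  by rewrite /bad inE => /andP [_ /andP [_]]; rewrite /gp -ltnNge.
pose F (q : V * V) := edge3 q.2 t q.1.
have inQ : forall q, q \in Q -> [/\ q.1 \in S, q.1 != t, q.2 \in A, q.2 != t
     & (q.2 != q.1 /\ edge3 q.2 t q.1 \notin H)].
  move=> q; rewrite /Q /bad /missA !inE => /andP [/andP [-> /andP [-> _]]].
  by case/and4P => -> -> -> ->.
have FM : forall q, q \in Q -> F q \in Mis t.
  move=> q /inQ [q1S q1t q2A q2t [q21 nH]]; rewrite /F /Mis /BAB !inE nH !andbT.
  have tq1 : t != q.1 by rewrite eq_sym.
  rewrite UAB subsetT (card_edge3 q2t q21 tq1) /= /edge3.
  have q1A : (q.1 \in A) = (t \in A).
    case: hS => /subsetP sub.
      by rewrite (sub _ q1S) (sub _ tS).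
    by rewrite (djF' dAB (sub _ q1S)) (djF' dAB (sub _ tS)).
  case tA: (t \in A).
    have -> : (q.2 |: (t |: [set q.1])) :&: A = q.2 |: (t |: [set q.1]).
      apply/setIidPl/subsetP => z; rewrite !inE.
      by case/orP => [/eqP ->|/orP [] /eqP ->] //; rewrite q1A.
    by rewrite -/(edge3 q.2 t q.1) (card_edge3 q2t q21 tq1) eqxx orbT.
  have -> : (q.2 |: (t |: [set q.1])) :&: A = [set q.2].
    apply/setP => z; rewrite !inE.
    case: (boolP (z == q.2)) => [/eqP -> //|_]; rewrite /=.
    by case/boolP: (z == t) => [/eqP ->|_] /=; [rewrite tA|case/boolP: (z == q.1) => [/eqP ->|] //=; rewrite q1A tA].
  by rewrite cards1 eqxx orbT.
pose Q1 := [set q in Q | enum_rank q.1 < enum_rank q.2].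
pose Q2 := [set q in Q | enum_rank q.2 < enum_rank q.1].
have QU : Q \subset Q1 :|: Q2.
  apply/subsetP => q qQ; have [_ _ _ _ [q21 _]] := inQ q qQ.
  case: (ltngtP (enum_rank q.1) (enum_rank q.2)) => h.
  - by apply/setUP; left; rewrite /Q1 inE qQ.
  - by apply/setUP; right; rewrite /Q2 inE qQ.
  - by move/val_inj/enum_rank_inj: h => E; move: q21; rewrite E eqxx.
have cQi : forall (Qi : {set V * V}) (lt : V -> V -> bool),
  Qi \subset Q -> (forall q, q \in Qi -> lt q.1 q.2) ->
  (forall x y, lt x y -> lt y x -> False) -> #|Qi| <= #|Mis t|.
  move=> Qi lt /subsetP QiQ hlt asym.
  rewrite -(card_in_imset (f := F)); last first.
    move=> [u a] [u' a'] p1 p2; rewrite /F /= => E.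
    have [s1 ut _ at' [au _]] := inQ _ (QiQ _ p1).
    have [s2 u't _ a't [a'u' _]] := inQ _ (QiQ _ p2).
    have l1 := hlt _ p1; have l2 := hlt _ p2; rewrite /= in l1 l2 s1 ut at' au s2 u't a't a'u'.
    case: (inj3 ut at' au u't a't a'u' E) => [[-> ->] //|[E1 E2]].
    by exfalso; apply: (asym u a) => //; rewrite E1 E2.
  apply: subset_leq_card; apply/subsetP => e /imsetP [q qQ ->]; exact: FM (QiQ _ qQ).
have h1 : #|Q1| <= #|Mis t|.
  apply: (cQi Q1 (fun x y => enum_rank x < enum_rank y)).
  - by apply/subsetP => q; rewrite inE => /andP [].
  - by move=> q; rewrite inE => /andP [].
  - move=> x y; lia.
have h2 : #|Q2| <= #|Mis t|.
  apply: (cQi Q2 (fun x y => enum_rank y < enum_rank x)).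
  - by apply/subsetP => q; rewrite inE => /andP [].
  - by move=> q; rewrite inE => /andP [].
  - move=> x y; lia.
have h3 : #|Q| <= #|Q1| + #|Q2| := leq_trans (subset_leq_card QU) (leq_card_setU _ _).
have h4 := hmis t.
set b := #|bad| in lb *.
set c := #|Mis t| in h1 h2 h4.
have h5 : b * m.+1 <= 8 * c by lia.
have h6 : 500 * (b * m.+1) <= 8 * m ^ 2 by lia.
rewrite leqNgt; apply/negP => h7.
have h8 : m.+1 <= 4 * b by lia.
have h9 : m.+1 * m.+1 <= 4 * b * m.+1 by rewrite leq_mul2r h8 orbT.
nia.
Qed.
End Count.


Lemma card_sum (T : finType) (Z : {set T}) (P : pred T) :
  #|[set x in Z | P x]| = \sum_(x in Z) (P x : nat).
Proof.
rewrite -sum1_card big_mkcond [RHS]big_mkcond /=; apply: eq_bigr => x _.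
by rewrite !inE; case: (x \in Z); case: (P x).
Qed.

Lemma card_exchange (T : finType) (Z W : {set T}) (P : T -> T -> bool) :
  \sum_(a in Z) #|[set r in W | P a r]| = \sum_(r in W) #|[set a in Z | P a r]|.
Proof.
under eq_bigr => a _ do rewrite card_sum.
rewrite exchange_big /=; apply: eq_bigr => r _; by rewrite card_sum.
Qed.

Section Compat.
Variables (V : finType) (A : {set V}) (H : {set {set V}}) (m : nat).

Definition compat (s t : V -> V) (x r : V) :=
  [&& edge3 x r (s r) \in H, edge3 x r (t (s r)) \in H & edge3 x (s r) (t (s r)) \in H].

Lemma nonN_bound (s t : V -> V) (Xs : {set V}) r :
  Xs \subset A ->
  (forall a, a \in Xs -> [&& a != r, a != s r & a != t (s r)]) ->
  [&& gp A H m r (s r), gp A H m r (t (s r)) & gp A H m (s r) (t (s r))] ->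
  4 * #|[set a in Xs | ~~ compat s t a r]| <= 3 * m.
Proof.
move=> /subsetP XA hX /and3P [g1 g2 g3].
have : #|[set a in Xs | ~~ compat s t a r]| <=
    #|missA A H r (s r)| + #|missA A H r (t (s r))| + #|missA A H (s r) (t (s r))|.
  apply: (leq_trans _ (leq_add (leq_card_setU _ _) (leqnn _))).
  apply: (leq_trans _ (leq_card_setU _ _)); apply: subset_leq_card.
  apply/subsetP => a; rewrite inE => /andP [aX].
  have aA := XA a aX; have /and3P [d1 d2 d3] := hX a aX.
  rewrite /compat /missA !inE aA d1 d2 d3 /=.
  by rewrite !negb_and; case/orP => [->|/orP [] ->]; rewrite ?orbT.
rewrite /gp in g1 g2 g3; lia.
Qed.
End Compat.

Import Order.TTheory GRing.Theory Num.Theory.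

Lemma real_step (R : realFieldType) (alpha : R) (N K : nat) :
  (0 < alpha)%R -> (alpha < 1 / 10 ^+ 5)%R ->
  (N%:R <= alpha * K%:R)%R -> 10 ^ 5 * N <= K.
Proof.
move=> a0 a1 h.
have hK : (0 <= K%:R :> R)%R by rewrite ler0n.
have h2 : (alpha * K%:R <= (1 / 10 ^+ 5) * K%:R)%R.
  by apply: ler_wpM2r => //; apply: ltW.
have c0 : (0 < (10 ^+ 5 : R))%R by rewrite exprn_gt0 // ltr0n.
have h3 : ((10 ^ 5 * N)%:R <= K%:R :> R)%R.
  rewrite natrM natrX.
  have h4 := le_trans h h2.
  rewrite -(ler_pM2l c0) in h4; apply: (le_trans h4).
  have -> : ((10 ^+ 5 : R) * (1 / 10 ^+ 5 * K%:R) = K%:R)%R.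
    by field.
  by [].
by rewrite ler_nat in h3.
Qed.

Theorem lemma6p1 (R : realFieldType) (alpha : R) :
  (0 < alpha)%R -> (alpha < 1 / 10 ^+ 5)%R ->
  exists m0 : nat, forall m : nat, m0 <= m ->
  forall (V : finType) (A B : {set V}) (H : {set {set V}}),
    is_3graph H -> [disjoint A & B] -> A :|: B = [set: V] ->
    #|A| = 6 * m -> #|B| = 6 * m ->
    (forall v : V, alpha_good alpha H (BAB A B) v) ->
    has_K4minus_factor H.
Proof.
move=> a0 a1; exists 0 => m _ V A B H _ dAB UAB cA cB hgood.
have cV : #|V| = 12 * m.
  rewrite -cardsT -UAB cardsU (disjoint_setI0 dAB) cards0 cA cB; lia.
have hmis : forall v, 500 * #|Mis A B H v| <= m ^ 2.
  move=> v; have := real_step a0 a1 (hgood v); rewrite cV expnMn -/(Mis A B H v).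
  move=> h; lia.
have gsym := gp_sym A H m.
have AnB : forall v, v \in A -> v \in B = false by move=> v; apply: djF.
(* triangle factor of B *)
have [RB [MB [LB [sB [tB hB]]]]] := TF gsym (S := B) (k := 2 * m)
   ltac:(rewrite cB; lia)
   ltac:(move=> s sB; have := badpart dAB UAB hmis (or_intror (subxx B)) sB; lia).
have [/subsetP RBB /subsetP MBB /subsetP LBB] := TF_sub hB.
have hB' := hB; case: hB' => _ _ cRB [_ sBim] [[_ tBim] gB].
have sBM : forall r, r \in RB -> sB r \in MB by move=> r rR; rewrite -sBim; apply: imset_f.
have tBL : forall r, r \in MB -> tB r \in LB by move=> r rR; rewrite -tBim; apply: imset_f.
pose Bbad := [set a in A | m < #|[set r in RB | ~~ compat H sB tB a r]|].
have dB : forall r, r \in RB -> 4 * #|[set a in A | ~~ compat H sB tB a r]| <= 3 * m.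
  move=> r rR; apply: nonN_bound; [exact: subxx| |exact: gB].
  move=> a aA; have nB := AnB a aA.
  apply/and3P; split; apply/eqP => E; move: nB.
  - by rewrite E RBB.
  - by rewrite E MBB // sBM.
  - by rewrite E LBB // tBL // sBM.
have cBbad : #|Bbad| <= 3 * m.
  have s1 := card_exchange A RB (fun a r => ~~ compat H sB tB a r).
  have s2 : 4 * \sum_(r in RB) #|[set a in A | ~~ compat H sB tB a r]| <= \sum_(r in RB) 3 * m.
    rewrite big_distrr /=; apply: leq_sum => r rR; exact: dB.
  rewrite sum_nat_const cRB in s2.
  have s3 : \sum_(a in A) (m.+1 * (a \in Bbad)) <=
            \sum_(a in A) #|[set r in RB | ~~ compat H sB tB a r]|.
    apply: leq_sum => a aA; case: (boolP (a \in Bbad)) => [|_]; last by rewrite muln0.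
    by rewrite /Bbad inE aA /= muln1.
  rewrite -big_distrr /= -card_sum in s3.
  have eB : [set a in A | a \in Bbad] = Bbad.
    by apply/setP => a; rewrite /Bbad !inE; case: (a \in A).
  rewrite eB s1 in s3.
  have s4 : 4 * (m.+1 * #|Bbad|) <= 6 * (m * m) by lia.
  nia.
have [X [XS cX]] : exists X : {set V}, X \subset A :\: Bbad /\ #|X| = 3 * m.
  apply: sub_card_set; rewrite cardsD cA.
  have := subset_leq_card (subsetIr A Bbad); lia.
have XA : X \subset A by apply: (subset_trans XS); apply: subsetDl.
have cAX : #|A :\: X| = 3 * m by rewrite cardsD (setIidPr XA) cA cX; lia.
have [RA [MA [LA [sA [tA hA]]]]] := TF gsym (S := A :\: X) (k := m)
   cAX
   ltac:(move=> s sA; have := badpart dAB UAB hmis (or_introl (subsetDl A X)) sA; lia).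
have dBAX : [disjoint B & A :\: X].
  rewrite -setI_eq0; apply/eqP/setP => v; rewrite !inE.
  by case vB: (v \in B); rewrite // (djF' dAB vB) andbF.
have hG := TF_glue hB hA dBAX.
have eqS : B :|: (A :\: X) = ~: X.
  apply/setP => v; rewrite !inE.
  have : v \in A :|: B by rewrite UAB inE.
  rewrite inE; case vA: (v \in A); case vB: (v \in B); case vX: (v \in X) => //=.
  - by rewrite (AnB v vA) in vB.
  - by move: (subsetP XA v vX); rewrite vA.
rewrite eqS in hG.
set sig := (fun v => if v \in B then sB v else sA v) in hG.
set tau := (fun v => if v \in B then tB v else tA v) in hG.
have [/subsetP RS /subsetP MS /subsetP LS] := TF_sub hG.
have hG' := hG; case: hG' => _ _ cR [_ sim] [[_ tim] gG].
have agree : forall x r, r \in RB -> compat H sig tau x r = compat H sB tB x r.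
  move=> x r rR; rewrite /compat /sig /tau (RBB _ rR) (MBB _ (sBM _ rR)).
  by [].
have [f [finj fim fr]] : exists f : V -> V,
    [/\ {in X &, injective f}, f @: X = RB :|: RA & {in X, forall x, compat H sig tau x (f x)}].
  apply: matching_lemma; last by rewrite cR cX; lia.
  move=> x y xX yR.
  have h1 : 4 * #|[set x' in X | ~~ compat H sig tau x' y]| <= 3 * m.
    apply: nonN_bound; [exact: XA| |exact: (gG y yR)].
    move=> a aX; have sy : sig y \in MB :|: MA by rewrite -sim; apply: imset_f.
    have ty : tau (sig y) \in LB :|: LA by rewrite -tim; apply: imset_f.
    have := RS _ yR; have := MS _ sy; have := LS _ ty; rewrite !inE.
    move=> n1 n2 n3; apply/and3P; split; apply/eqP => E.
    + by move: n3; rewrite -E aX.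
    + by move: n2; rewrite -E aX.
    + by move: n1; rewrite -E aX.
  have xnb : x \notin Bbad by move: (subsetP XS x xX); rewrite inE => /andP [].
  have h2 : #|[set r in RB | ~~ compat H sB tB x r]| <= m.
    by move: xnb; rewrite /Bbad inE (subsetP XA x xX) /= -leqNgt.
  have h3 := card_split RB (compat H sB tB x).
  have h4 : #|[set r in RB | compat H sB tB x r]| <= #|[set y' in RB :|: RA | compat H sig tau x y']|.
    apply: subset_leq_card; apply/subsetP => r; rewrite !inE => /andP [rR c].
    by rewrite rR agree.
  rewrite cRB in h3; lia.
apply: (assemble (g := gp A H m) hG finj fim) => x xX.
exact: fr.
Qed.
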